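(* Let $x_s<x_t$ be integers, let $C\ge 0$, and let $f:[x_s,x_t]\to\mathbb{R}$ be such that $([x_s,x_t],f)$ is an Ameso($C$) pair. Suppose there exist $x^0\in[x_s,x_t]$ and a positive integer $b$ with $[x^0,x^0+b]\subseteq[x_s,x_t]$ such that $f(x^0)=\min_{y\in[x_s,x^0+b]}f(y)$ and $f(x^0)+C\le \max_{y\in[x^0,x^0+b]}f(y)$. Then $f(x^0)=\min_{y\in[x_s,x_t]}f(y)$.
   Context: For integers $a\le b$, $[a,b]$ denotes the set of integers $\{a,a+1,\dots,b\}$ (similarly $(a,b]$ and $[a,b)$ denote integer sets). Floors and ceilings of vectors are taken componentwise. A set $D^n\subseteq\mathbb{Z}^n$ is an Ameso set if $\lceil(\vec x+\vec y)/2\rceil,\lfloor(\vec x+\vec y)/2\rfloor\in D^n$ for all $\vec x,\vec y\in D^n$. For $C\ge 0$, $(D^n,f)$ is an Ameso($C$) pair if $D^n$ is an Ameso set, $f:D^n\to\mathbb{R}$ is bounded below, and $f(\vec x)+f(\vec y)+C\ge f(\lceil(\vec x+\vec y)/2\rceil)+f(\lfloor(\vec x+\vec y)/2\rfloor)$ for all $\vec x,\vec y\in D^n$. *)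

(* Defs.v *)
From Stdlib Require Import Reals ZArith Lra Lia.
Open Scope R_scope.

Definition Zint (a b : Z) : Z -> Prop := fun x => (a <= x <= b)%Z.

Definition zfloor_mid (x y : Z) : Z := Z.div (x + y) 2.
Definition zceil_mid (x y : Z) : Z := (- Z.div (- (x + y)) 2)%Z.

Definition Ameso_set (D : Z -> Prop) : Prop :=
  forall x y, D x -> D y -> D (zceil_mid x y) /\ D (zfloor_mid x y).

(* (D, f) is an Ameso(C) pair; f is given as a total function on Z, only its
   values on D are relevant. *)
Definition Ameso_pair (C : R) (D : Z -> Prop) (f : Z -> R) : Prop :=
  Ameso_set D /\
  (exists m : R, forall x, D x -> m <= f x) /\
  (forall x y, D x -> D y ->
     f x + f y + C >= f (zceil_mid x y) + f (zfloor_mid x y)).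

(* Main.v *)
Require Import Defs.
From Stdlib Require Import Reals ZArith Lra Lia.
Open Scope R_scope.

Lemma max_exists (h : Z -> R) (a : Z) (n : nat) :
  exists m, (a <= m <= a + Z.of_nat n)%Z /\
    forall v, (a <= v <= a + Z.of_nat n)%Z -> h v <= h m.
Proof.
  induction n as [|n [m [Hm Hv]]].
  - exists a. split; [lia|]. intros v Hv. replace v with a by lia. lra.
  - destruct (Rle_or_lt (h (a + Z.of_nat (S n))%Z) (h m)) as [Hle|Hlt].
    + exists m. split; [lia|]. intros v Hv'.
      destruct (Z.eq_dec v (a + Z.of_nat (S n))%Z) as [->|Hne]; [lra|].
      apply Hv; lia.
    + exists (a + Z.of_nat (S n))%Z. split; [lia|]. intros v Hv'.
      destruct (Z.eq_dec v (a + Z.of_nat (S n))%Z) as [->|Hne]; [lra|].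
      assert (h v <= h m) by (apply Hv; lia). lra.
Qed.

Lemma mid_eq (a c w : Z) : (a + c = 2 * w)%Z ->
  zceil_mid a c = w /\ zfloor_mid a c = w.
Proof.
  intros E. unfold zceil_mid, zfloor_mid. rewrite E.
  replace (- (2 * w))%Z with ((- w) * 2)%Z by lia.
  rewrite !Z.div_mul by lia. rewrite Z.mul_comm, Z.div_mul by lia. lia.
Qed.

Theorem theorem1 (xs xt : Z) (C : R) (f : Z -> R) (x0 b : Z) :
  (xs < xt)%Z -> 0 <= C ->
  Ameso_pair C (Zint xs xt) f ->
  Zint xs xt x0 -> (0 < b)%Z ->
  (forall y, Zint x0 (x0 + b) y -> Zint xs xt y) ->
  (* f(x0) = min over [xs, x0+b] *)
  (forall y, Zint xs (x0 + b) y -> f x0 <= f y) ->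
  (* f(x0) + C <= max over [x0, x0+b] *)
  (exists y, Zint x0 (x0 + b) y /\ f x0 + C <= f y) ->
  (* conclusion: f(x0) = min over [xs, xt] *)
  forall y, Zint xs xt y -> f x0 <= f y.
Proof.
  intros Hst HC [_ [_ Ham]] Hx0 Hb Hsub Hmin [z [Hz Hfz]] y Hy.
  unfold Zint in *.
  destruct (Z_le_gt_dec y (x0 + b)) as [Hyb|Hyb].
  { apply Hmin. unfold Zint; lia. }
  destruct (Rle_or_lt (f x0) (f y)) as [H|Hlt]; [exact H|exfalso].
  set (k := (f x0 - f y) / IZR (y - x0)).
  assert (HL : 0 < IZR (y - x0)) by (apply IZR_lt; lia).
  assert (Hk : 0 < k) by (unfold k; apply Rdiv_lt_0_compat; lra).
  set (h := fun w => f w + k * IZR w).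
  assert (Hhy : h y = h x0).
  { unfold h, k. rewrite minus_IZR in *. field. lra. }
  assert (key : forall a c w, (x0 <= a <= y)%Z -> (x0 <= c <= y)%Z ->
            (a + c = 2 * w)%Z -> 2 * h w <= h a + h c + C).
  { intros a c w Ha Hc E. destruct (mid_eq a c w E) as [E1 E2].
    assert (Hf := Ham a c ltac:(unfold Zint; lia) ltac:(unfold Zint; lia)).
    rewrite E1, E2 in Hf.
    assert (E3 : IZR a + IZR c = 2 * IZR w).
    { rewrite <- plus_IZR. rewrite E. rewrite mult_IZR. reflexivity. }
    assert (E4 : k * IZR a + k * IZR c = 2 * (k * IZR w)).
    { rewrite <- Rmult_plus_distr_l, E3. ring. }
    unfold h. lra. }
  destruct (max_exists h x0 (Z.to_nat (y - x0))) as [m [Hm Hmax]].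
  rewrite Z2Nat.id in Hm, Hmax by lia.
  replace (x0 + (y - x0))%Z with y in Hm, Hmax by lia.
  assert (HM : h m <= h x0 + C).
  { destruct (Z_le_gt_dec (2 * m) (x0 + y)) as [H1|H1].
    - assert (K := key x0 (2 * m - x0)%Z m ltac:(lia) ltac:(lia) ltac:(lia)).
      assert (h (2 * m - x0)%Z <= h m) by (apply Hmax; lia). lra.
    - assert (K := key (2 * m - y)%Z y m ltac:(lia) ltac:(lia) ltac:(lia)).
      assert (h (2 * m - y)%Z <= h m) by (apply Hmax; lia). lra. }
  destruct (Z.eq_dec z x0) as [->|Hne].
  - assert (C = 0) by lra.
    assert (h (x0 + 1)%Z <= h m) by (apply Hmax; lia).
    assert (f x0 <= f (x0 + 1)%Z) by (apply Hmin; unfold Zint; lia).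
    unfold h in *. rewrite plus_IZR in *. lra.
  - assert (h z <= h m) by (apply Hmax; lia).
    assert (IZR x0 < IZR z) by (apply IZR_lt; lia).
    unfold h in *. nra.
Qed.
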